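(* Let $n\ge2$, $d\ge1$, $\mathbf K\in\mathbb R^{n\times d}$ with rows $\mathbf k_i$, $\beta>0$, $\tau>0$, and for a positive integer $s$ let $\mathbf T^s\in\mathbb R^{n\times n}$ be given by $\mathbf T^s_{il}=\sum_{p=0}^s\frac{1}{p!}\big(\tfrac{\beta}{\tau^2}\langle\mathbf k_i,\mathbf k_l\rangle\big)^p$. Then, with $(\sigma,\delta)\defeq\big(\frac{s}{\log n},\frac{d}{\log n}\big)$, $$\mathrm{rank}(\mathbf T^s)\le\frac{1}{\sqrt\pi}\,n^{(\sigma+\delta)\,\mathrm{Ent}\left(\frac{\sigma}{\sigma+\delta}\right)},$$ where $\mathrm{Ent}(p)\defeq-p\log p-(1-p)\log(1-p)$.
   Context: $\log$ is the natural logarithm. *)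

(* Defs.v *)
From HB Require Import structures.
From mathcomp Require Import all_boot all_order all_algebra.
From mathcomp Require Import all_classical all_reals all_analysis.
Set Implicit Arguments. Unset Strict Implicit. Unset Printing Implicit Defensive.
Import Order.TTheory GRing.Theory Num.Theory.
Local Open Scope ring_scope.

Definition Ent {R : realType} (p : R) : R :=
  - (p * ln p) - (1 - p) * ln (1 - p).

Definition row_dot {R : realType} (n d : nat) (K : 'M[R]_(n, d)) (i l : 'I_n) : R :=
  \sum_(j < d) K i j * K l j.

Definition Tmat {R : realType} (n d s : nat) (K : 'M[R]_(n, d)) (beta tau : R)
  : 'M[R]_n :=
  \matrix_(i < n, l < n)
    \sum_(p < s.+1) (p`!%:R)^-1 * (beta / tau ^+ 2 * row_dot K i l) ^+ p.

(* Main.v *)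
Require Import Defs.
From HB Require Import structures.
From mathcomp Require Import all_boot all_order all_algebra.
From mathcomp Require Import all_classical all_reals all_analysis.
From mathcomp Require Import zify ring lra.
Import Order.TTheory GRing.Theory Num.Theory.
Set Implicit Arguments. Unset Strict Implicit. Unset Printing Implicit Defensive.

Lemma bern (c b n : nat) : (c + b) ^ n.+1 <= c ^ n.+1 + n.+1 * b * (c + b) ^ n.
Proof.
elim: n => [|n IH]; first by rewrite !expn1 expn0 mul1n muln1.
have H := leq_mul (leqnn c) IH.
rewrite [(c+b)^n.+2]expnS [c^n.+2]expnS [(c+b)^n.+1]expnS in H *.
set X := (c+b)^n in H *. set Y := c^n.+1 in H *.
nia.
Qed.

Lemma stepS (m : nat) : 0 < m -> (m.+1) ^ (m.*2.+1) <= m ^ m * (m.+2) ^ m.+1.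
Proof.
move=> m0.
have H := bern (m * m.+2) 1 m.
have E : m * m.+2 + 1 = m.+1 ^ 2 by rewrite addn1; nia.
rewrite E -!expnM muln1 in H.
rewrite expnMn in H.
have E2 : 2 * m.+1 = (m.*2.+1).+1 by rewrite -mul2n; lia.
have E3 : 2 * m = m.*2 by rewrite mul2n.
rewrite E2 E3 [m.+1 ^ (m.*2.+1).+1]expnS [m ^ m.+1]expnS in H.
rewrite -(leq_pmul2l m0) [m.+1 ^ m.*2.+1]expnS; rewrite [m.+1 ^ m.*2.+1]expnS in H; nia.
Qed.

Lemma monoM (j t : nat) : 0 < j ->
  j.+1 ^ j * (j + t) ^ (j + t) <= j ^ j * (j + t).+1 ^ (j + t).
Proof.
move=> j0; elim: t => [|t IH]; first by rewrite addn0 mulnC.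
set N := j + t in IH *. rewrite addnS -/N.
have N0 : 0 < N by lia.
have S := stepS N0.
have H1 := leq_mul IH (leqnn (N.+1 ^ N.+1)).
have H2 := leq_mul (leqnn (j ^ j)) S.
have NN : 0 < N ^ N by rewrite expn_gt0 N0.
rewrite -(leq_pmul2l NN).
have E : N.+1 ^ N * N.+1 ^ N.+1 = N.+1 ^ N.*2.+1 by rewrite -expnD; congr (_ ^ _); lia.
nia.
Qed.

Lemma central k : 2 * 'C((k.+1).*2, k.+1) <= 4 ^ k.+1.
Proof.
elim: k => [|k IH]; first by [].
have E1 : (k.+2).*2 * 'C((k.+1).*2.+1, k.+1) = k.+2 * 'C((k.+2).*2, k.+2)
  by exact: (mul_bin_diag (k.+2).*2 k.+1).
have E2 : (k.+1).*2.+1 * 'C((k.+1).*2, k.+1) = k.+2 * 'C((k.+1).*2.+1, k.+1).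
  have := mul_bin_down ((k.+1).*2.+1) k.+1.
  have -> : (k.+1).*2.+1 - k.+1 = k.+2 by rewrite -addnn; lia.
  by [].
have Hp : 0 < k.+2 * k.+2 by [].
rewrite -(leq_pmul2l Hp).
have H1 := leq_mul (leqnn ((k.+2).*2 * (k.+1).*2.+1)) IH.
rewrite [4 ^ k.+2]expnS.
move: E1 E2 H1.
set C1 := 'C(_, k.+1). set C2 := 'C(_, k.+1). set C3 := 'C(_, k.+2).
set P := 4 ^ k.+1.
nia.
Qed.

Lemma keyle (k t : nat) : 0 < k ->
  2 * 'C(k + (k + t), k) * k ^ k * (k + t) ^ (k + t) <= (k + (k + t)) ^ (k + (k + t)).
Proof.
move=> k0; elim: t => [|t IH].
  rewrite addn0.
  have E : (k + k) ^ (k + k) = 4 ^ k * (k ^ k * k ^ k).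
    by rewrite {1}addnn -mul2n expnMn !expnD -expnMn.
  rewrite E addnn.
  case: k k0 {E} => [//|k] _.
  have := central k. rewrite -mulnA => H; exact: leq_mul H (leqnn _).
set j := k + t in IH *. rewrite addnS -/j addnS.
set N := k + j in IH *.
have j0 : 0 < j by lia.
have E1 := mul_bin_down N.+1 k. rewrite /= in E1.
have E2 : N.+1 - k = j.+1 by rewrite /N; lia.
rewrite E2 in E1.
have M := monoM k j0. rewrite (addnC j k) -/N in M.
rewrite -(leq_pmul2l (ltn0Sn j)).
have H1 := leq_mul IH (leqnn (j.+1 ^ j)).
have jj : 0 < j ^ j by rewrite expn_gt0 j0.
rewrite [j.+1 ^ j.+1]expnS [N.+1 ^ N.+1]expnS.
suff : 2 * 'C(N, k) * k ^ k * j.+1 ^ j <= N.+1 ^ N.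
  move=> H.
  have -> : j.+1 * (2 * 'C(N.+1, k) * k ^ k * (j.+1 * j.+1 ^ j)) =
    2 * k ^ k * (j.+1 * j.+1 ^ j) * (j.+1 * 'C(N.+1, k)) by ring.
  rewrite -E1.
  have -> : 2 * k ^ k * (j.+1 * j.+1 ^ j) * (N.+1 * 'C(N, k)) =
    (N.+1 * j.+1) * (2 * 'C(N, k) * k ^ k * j.+1 ^ j) by ring.
  have -> : j.+1 * (N.+1 * N.+1 ^ N) = (N.+1 * j.+1) * N.+1 ^ N by ring.
  exact: leq_mul (leqnn _) H.
rewrite -(leq_pmul2l jj).
apply: leq_trans M. rewrite [_ * N ^ N]mulnC.
apply: leq_trans H1. rewrite leq_eqVlt; apply/orP; left; apply/eqP; ring.
Qed.

Lemma keysym k j : 0 < k -> 0 < j ->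
  2 * 'C(k + j, k) * k ^ k * j ^ j <= (k + j) ^ (k + j).
Proof.
move=> k0 j0; case: (leqP k j) => h.
  by have := keyle (j - k) k0; rewrite subnKC.
have h' : j <= k by exact: ltnW.
have := keyle (k - j) j0; rewrite subnKC // (addnC j k).
have -> : 'C(k + j, j) = 'C(k + j, k).
  by rewrite -(bin_sub (leq_addl k j)) addnK.
move=> H; apply: leq_trans H; rewrite leq_eqVlt; apply/orP; left; apply/eqP; ring.
Qed.

Lemma hockey s d' : \sum_(p < s.+1) 'C(p + d', p) = 'C(s + d'.+1, s).
Proof.
elim: s => [|s IH]; first by rewrite big_ord1 !bin0.
rewrite big_ord_recr /= IH.
by rewrite !addSn !addnS [RHS]binS addnC.
Qed.

Local Open Scope ring_scope.

Section LA.
Variable R : realType.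
Variables n d : nat.
Variable K : 'M[R]_(n, d).

Definition vrow (u : seq 'I_d) : 'rV[R]_n := \row_l \prod_(x <- u) K l x.
Definition Sp (p : nat) := [set t : p.-tuple 'I_d | sorted leq (map val t)].
Definition Vp (p : nat) : 'M[R]_(#|Sp p|, n) :=
  \matrix_(k, l) \prod_(x <- (enum_val k : p.-tuple 'I_d)) K l x.

Lemma vrow_sub p (t : p.-tuple 'I_d) : t \in Sp p -> (vrow t <= Vp p)%MS.
Proof.
move=> Ht.
have -> : vrow t = row (enum_rank_in Ht t) (Vp p).
  by apply/rowP => l; rewrite !mxE enum_rankK_in.
exact: row_sub.
Qed.

Definition leI : rel 'I_d := fun x y => (x <= y)%N.
Definition rep p (f : {ffun 'I_p -> 'I_d}) : p.-tuple 'I_d :=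
  sort_tuple leI [tuple f i | i < p].

Lemma rep_in p (f : {ffun 'I_p -> 'I_d}) : rep f \in Sp p.
Proof.
rewrite inE sorted_map /=.
apply: sort_sorted => x y; exact: leq_total.
Qed.

Lemma vrow_rep p (f : {ffun 'I_p -> 'I_d}) l :
  vrow (rep f) 0 l = \prod_(m < p) K l (f m).
Proof.
rewrite mxE /rep /=.
rewrite (perm_big [tuple f i | i < p]) ?perm_sort //.
by rewrite big_tuple; apply: eq_bigr => i _; rewrite tnth_mktuple.
Qed.


Lemma row_T s beta tau i :
  row i (Tmat s K beta tau) = \sum_(p < s.+1) \sum_(f : {ffun 'I_p -> 'I_d})
    (((p`!%:R)^-1 * (beta / tau ^+ 2) ^+ p * \prod_(m < p) K i (f m)) *: vrow (rep f)).
Proof.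
apply/rowP => l; rewrite !mxE summxE; apply: eq_bigr => p _.
rewrite summxE exprMn /row_dot.
have -> : (\sum_(j < d) K i j * K l j) ^+ p = \prod_(m < p) \sum_(j < d) K i j * K l j.
  by rewrite prodr_const card_ord.
rewrite bigA_distr_bigA /=.
rewrite !mulr_sumr; apply: eq_bigr => f _.
rewrite mxE vrow_rep big_split /= !mulrA.
by [].
Qed.

Lemma rank_bigadds (I : finType) (P : pred I) (F : I -> 'M[R]_n) :
  (\rank (\sum_(i | P i) F i)%MS <= \sum_(i | P i) \rank (F i))%N.
Proof.
apply: (big_ind2 (fun (A : 'M[R]_n) k => \rank A <= k)%N).
- by rewrite mxrank0.
- move=> A1 k1 A2 k2 h1 h2; apply: leq_trans (mxrank_adds_leqif A1 A2) _.
  exact: leq_add.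
- by [].
Qed.

Lemma rankT s beta tau :
  (\rank (Tmat s K beta tau) <= \sum_(p < s.+1) #|Sp p|)%N.
Proof.
have sub : (Tmat s K beta tau <= \sum_(p < s.+1) <<Vp p>>)%MS.
  apply/row_subP => i; rewrite row_T.
  apply: summx_sub => p _; apply: summx_sub => f _; apply: scalemx_sub.
  apply: submx_trans (vrow_sub (rep_in f)) _.
  by apply: (sumsmx_sup p); rewrite // genmxE.
apply: leq_trans (mxrankS sub) _.
apply: leq_trans (rank_bigadds _ _) _.
apply: leq_sum => p _; rewrite genmxE; exact: rank_leq_row.
Qed.

End LA.

Section Ent.
Variable R : realType.
Lemma ent_comp (S D L : R) : 0 < S -> 0 < D -> L != 0 ->
  (S / L + D / L) * Ent (S / L / (S / L + D / L)) * L
    = S * ln ((S + D) / S) + D * ln ((S + D) / D).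
Proof.
move=> S0 D0 Lne.
have SD0 : 0 < S + D by rewrite addr_gt0.
have SDne : S + D != 0 by rewrite gt_eqF.
have Sne : S != 0 by rewrite gt_eqF.
have Dne : D != 0 by rewrite gt_eqF.
rewrite /Ent.
have -> : S / L / (S / L + D / L) = S / (S + D) by field; rewrite SDne Lne.
have -> : 1 - S / (S + D) = D / (S + D) by field.
have h1 : ln (S / (S + D)) = - ln ((S + D) / S).
  by rewrite -lnV ?invf_div // posrE divr_gt0.
have h2 : ln (D / (S + D)) = - ln ((S + D) / D).
  by rewrite -lnV ?invf_div // posrE divr_gt0.
rewrite h1 h2; field; by rewrite SDne Lne.
Qed.
End Ent.

Unset Implicit Arguments.
Set Strict Implicit.

Theorem lemma4 (R : realType) (n d s : nat) (K : 'M[R]_(n, d)) (beta tau : R) :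
  (2 <= n)%N -> (1 <= d)%N -> (0 < s)%N -> 0 < beta -> 0 < tau ->
  let sigma := s%:R / ln (n%:R : R) in
  let delta := d%:R / ln (n%:R : R) in
  (\rank (Tmat s K beta tau))%:R
    <= (Num.sqrt pi)^-1 *
       (n%:R : R) `^ ((sigma + delta) * Ent (sigma / (sigma + delta))).
Proof.
move=> n2 d1 s0 b0 t0; cbv zeta.

case: d K d1 => [//|d'] K _.
set N := (s + d'.+1)%N.
have hr : (\rank (Tmat s K beta tau) <= 'C(N, s))%N.
  apply: leq_trans (rankT K s beta tau) _.
  rewrite (eq_bigr (fun p : 'I_s.+1 => 'C(p + d', p))); last first.
    by move=> p _; rewrite /Sp card_sorted_tuples.
  by rewrite hockey.
have hkey := keysym s0 (ltn0Sn d').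
rewrite -/N in hkey.
set S : R := s%:R. set D : R := d'.+1%:R. set L := ln (n%:R : R).
have L0 : 0 < L by apply: ln_gt0; rewrite ltr1n.
have S0 : 0 < S by rewrite ltr0n.
have D0 : 0 < D by rewrite ltr0n.
have NE : (N%:R : R) = S + D by rewrite natrD.
have N0 : 0 < (N%:R : R) by rewrite NE addr_gt0.
have Lne : L != 0 by rewrite gt_eqF.
have Sne : S != 0 by rewrite gt_eqF.
have Dne : D != 0 by rewrite gt_eqF.
have Nne : (N%:R : R) != 0 by rewrite gt_eqF.
have SDne : S + D != 0 by rewrite gt_eqF // addr_gt0.
have Epow : (n%:R : R) `^ ((S / L + D / L) * Ent (S / L / (S / L + D / L)))
    = (N%:R / S) ^+ s * (N%:R / D) ^+ d'.+1.
  rewrite /powR ifF; last by rewrite pnatr_eq0; apply/negbTE; rewrite -lt0n; exact: ltnW.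
  rewrite ent_comp // -NE.
  rewrite expRD /S /D !expRM_natl !lnK // posrE divr_gt0 // ltr0n //.
rewrite Epow.
set X := (N%:R / S) ^+ s * (N%:R / D) ^+ d'.+1.
have hr' : ((\rank (Tmat s K beta tau))%:R : R) <= 'C(N, s)%:R by rewrite ler_nat.
have hk' : 2 * 'C(N, s)%:R * S ^+ s * D ^+ d'.+1 <= (N%:R : R) ^+ N.
  by move: hkey; rewrite -(ler_nat R) !natrM !natrX.
have hX : X * (S ^+ s * D ^+ d'.+1) = (N%:R : R) ^+ N.
  by rewrite /X mulrACA -!exprMn !divfK // -exprD.
have P0 : 0 < S ^+ s * D ^+ d'.+1 by rewrite mulr_gt0 // exprn_gt0.
have h2 : 2 * 'C(N, s)%:R <= X.
  rewrite -(ler_pM2r P0) hX; apply: le_trans hk'; rewrite !mulrA.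
  by [].
have X0 : 0 <= X by rewrite /X mulr_ge0 // exprn_ge0 // divr_ge0 // ltW.
have sp0 : 0 < Num.sqrt (pi : R) by rewrite sqrtr_gt0 pi_gt0.
have sq : Num.sqrt (pi : R) ^+ 2 = pi by rewrite sqr_sqrtr // pi_ge0.
have p4 : (pi : R) < 4.
  have := @pihalf_lt2 R; rewrite ltr_pdivrMr // => h; apply: lt_le_trans h _.
  by rewrite -natrM ler_nat.
have yz : Num.sqrt (pi : R) * (Num.sqrt pi)^-1 = 1 by rewrite mulfV // gt_eqF.
have z0 : 0 < (Num.sqrt (pi : R))^-1 by rewrite invr_gt0.
move: sp0 sq p4 yz z0 hr' h2 X0.
set y := Num.sqrt pi. set z := y^-1. set c := 'C(N, s)%:R. set r := (\rank _)%:R.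
move=> sp0 sq p4 yz z0 hr' h2 X0.
rewrite -sq in p4.
have y2 : y < 2 by nra.
have zh : 1 / 2 <= z by nra.
nra.
Qed.
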